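(* Let $R$ be a commutative ring with unit and let $S\subset\mathbb{N}$ be $R$-admissible. Then for each $m,n\in S$ with $m\mid n$ the homomorphism $\rho^R_{\langle n\rangle,\langle m\rangle}\colon R[q]^{\langle n\rangle}\to R[q]^{\langle m\rangle}$ is injective. Hence, regarding each $R[q]^{\langle n\rangle}$ ($n\in S$) as an $R$-subalgebra of $R[q]^{\langle1\rangle}=R[[q-1]]$ via these maps, $R[q]^S$ is identified with the intersection $\bigcap_{n\in S}R[q]^{\langle n\rangle}$. In particular, if $m,n\in\mathbb{N}$ and $m\mid n$, then $\rho^{\mathbb{Z}}_{\langle n\rangle,\langle m\rangle}\colon\mathbb{Z}[q]^{\langle n\rangle}\to\mathbb{Z}[q]^{\langle m\rangle}$ is injective, and $\mathbb{Z}[q]^{\mathbb{N}}=\bigcap_{n\in\mathbb{N}}\mathbb{Z}[q]^{\langle n\rangle}$ inside $\mathbb{Z}[[q-1]]$.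
   Context: $q$ is an indeterminate, $\Phi_n(q)$ the $n$th cyclotomic polynomial. For $S\subset\mathbb{N}$, $\Phi_S^*$ is the multiplicative subset of $\mathbb{Z}[q]$ generated by $\{\Phi_k(q):k\in S\}$, directed by divisibility, and $R[q]^S=\varprojlim_{f\in\Phi_S^*}R[q]/(f)$; for $S'\subset S$, $\rho^R_{S,S'}$ is induced by the identity of $R[q]$. For $n\in\mathbb{N}$, $\langle n\rangle=\{k\in\mathbb{N}:k\mid n\}$, so $R[q]^{\langle n\rangle}=\varprojlim_j R[q]/(q^n-1)^j$. $R$ is $p$-adically separated if $\bigcap_j p^jR=(0)$. For $k,k'\in\mathbb{N}$, $k\Leftrightarrow_R k'$ means $k=k'$, or $k/k'$ is an integer power (positive or negative exponent) of a prime $p$ with $R$ $p$-adically separated, or $R=\{0\}$. A subset $S\subset\mathbb{N}$ is $R$-admissible if it is nonempty, any two of its elements are joined by a finite chain in $S$ with consecutive elements related by $\Leftrightarrow_R$, $S$ is directed under divisibility, and $n\in S$ implies $\langle n\rangle\subset S$. *)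

(* Defs.v *)
From mathcomp Require Import all_boot all_order all_algebra all_field.
Set Implicit Arguments. Unset Strict Implicit. Unset Printing Implicit Defensive.
Import GRing.Theory.
Local Open Scope ring_scope.

Definition polyR (R : comNzRingType) (f : {poly int}) : {poly R} :=
  map_poly (fun z : int => z%:~R) f.

Definition congr_mod (R : comNzRingType) (f : {poly int}) (a b : {poly R}) : Prop :=
  exists h : {poly R}, a - b = h * polyR R f.

Definition PhiStar (S : nat -> Prop) (f : {poly int}) : Prop :=
  exists s : seq nat, (forall k, k \in s -> S k) /\ f = \prod_(k <- s) 'Phi_k.

(* Elements of R[q]^S = lim_{f in Phi_S^*} R[q]/(f) are represented by families
   x : f |-> x f (a representative in R[q] of the component in R[q]/(f)),
   compatible along divisibility f | g in Phi_S^*.  Two families represent the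
   same element iff all their components agree in R[q]/(f). *)
Definition compatible (R : comNzRingType) (S : nat -> Prop)
    (x : {poly int} -> {poly R}) : Prop :=
  forall f g, PhiStar S f -> PhiStar S g ->
    (exists h : {poly int}, g = h * f) -> congr_mod f (x g) (x f).

Definition lim_eq (R : comNzRingType) (S : nat -> Prop)
    (x y : {poly int} -> {poly R}) : Prop :=
  forall f, PhiStar S f -> congr_mod f (x f) (y f).

Definition divs (n : nat) : nat -> Prop := fun k => (0 < k)%N /\ (k %| n)%N.

Definition Nat_pos : nat -> Prop := fun k => (0 < k)%N.

Definition padic_separated (R : comNzRingType) (p : nat) : Prop :=
  forall x : R, (forall j : nat, exists y : R, x = (p ^ j)%:R * y) -> x = 0.

Definition equivR (R : comNzRingType) (k k' : nat) : Prop :=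
  k = k'
  \/ (exists (p : nat) (j : nat), prime p /\ padic_separated R p /\
        ((k = p ^ j * k')%N \/ (k' = p ^ j * k)%N))
  \/ (forall x : R, x = 0).

Inductive chain (S : nat -> Prop) (rel : nat -> nat -> Prop) : nat -> nat -> Prop :=
  | chain_refl a : S a -> chain S rel a a
  | chain_step a b c : chain S rel a b -> S c -> rel b c -> chain S rel a c.

Definition admissible (R : comNzRingType) (S : nat -> Prop) : Prop :=
  (forall k, S k -> (0 < k)%N) /\
  (exists k, S k) /\
  (forall a b, S a -> S b -> chain S (@equivR R) a b) /\
  (forall a b, S a -> S b -> exists c, [/\ S c, (a %| c)%N & (b %| c)%N]) /\
  (forall n, S n -> forall k, divs n k -> S k).

(* rho^R_{<n>,<m>} : R[q]^{<n>} -> R[q]^{<m>} (induced by the identity of R[q],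
   i.e. restriction of families) is injective. *)
Definition rho_injective (R : comNzRingType) (m n : nat) : Prop :=
  forall x y : {poly int} -> {poly R},
    compatible (divs n) x -> compatible (divs n) y ->
    lim_eq (divs m) x y -> lim_eq (divs n) x y.

(* Via rho_{S,<1>} (injective), R[q]^S is identified with the intersection over
   n in S of the images of rho_{<n>,<1>} in R[q]^{<1>} = R[[q-1]]. *)
Definition identified_with_intersection (R : comNzRingType) (S : nat -> Prop) : Prop :=
  (forall x y : {poly int} -> {poly R},
     compatible S x -> compatible S y ->
     lim_eq (divs 1) x y -> lim_eq S x y)
  /\
  (forall y : {poly int} -> {poly R}, compatible (divs 1) y ->
     (exists x, compatible S x /\ lim_eq (divs 1) x y) <->
     (forall n, S n -> exists z, compatible (divs n) z /\ lim_eq (divs 1) z y)).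

(* Main.v *)
Require Import Defs.
From mathcomp Require Import all_boot all_order all_algebra all_field ring zify.
From Stdlib Require Import ClassicalEpsilon.
Import GRing.Theory.
Local Open Scope ring_scope.
Set Implicit Arguments. Unset Strict Implicit.

Lemma polyRM (R : comNzRingType) f g : polyR R (f * g) = polyR R f * polyR R g.
Proof. exact: (rmorphM (map_poly intr)). Qed.
Lemma polyRB (R : comNzRingType) f g : polyR R (f - g) = polyR R f - polyR R g.
Proof. exact: (rmorphB (map_poly intr)). Qed.
Lemma polyRX (R : comNzRingType) f n : polyR R (f ^+ n) = polyR R f ^+ n.
Proof. exact: (rmorphXn (map_poly intr)). Qed.
Lemma polyRXn (R : comNzRingType) n : polyR R ('X^n - 1) = 'X^n - 1.
Proof. by rewrite polyRB /polyR map_polyXn rmorph1. Qed.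

Section CM.
Variable R : comNzRingType.
Implicit Types a b c : {poly R}.

Lemma cm_refl f a : congr_mod f a a.
Proof. by exists 0; rewrite subrr mul0r. Qed.
Lemma cm_sym f a b : congr_mod f a b -> congr_mod f b a.
Proof. by case=> h e; exists (- h); rewrite mulNr -e opprB. Qed.
Lemma cm_trans f a b c : congr_mod f a b -> congr_mod f b c -> congr_mod f a c.
Proof.
case=> h1 e1 [h2 e2]; exists (h1 + h2).
by rewrite mulrDl -e1 -e2 addrA subrK.
Qed.
Lemma cm_div f g h a b : congr_mod g a b -> g = h * f -> congr_mod f a b.
Proof.
case=> k e Hg; exists (k * polyR R h).
by rewrite e Hg polyRM mulrA.
Qed.
End CM.

Lemma PS_mono (S S' : nat -> Prop) f :
  (forall k, S k -> S' k) -> PhiStar S f -> PhiStar S' f.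
Proof. by move=> H [s [Hs ->]]; exists s; split=> // k /Hs /H. Qed.
Lemma PS_1 S : PhiStar S 1.
Proof. by exists [::]; rewrite big_nil. Qed.
Lemma PS_mul S f g : PhiStar S f -> PhiStar S g -> PhiStar S (f * g).
Proof.
move=> [s [Hs ->]] [t [Ht ->]]; exists (s ++ t); split; last by rewrite big_cat.
by move=> k; rewrite mem_cat => /orP [/Hs|/Ht].
Qed.
Lemma PS_exp S f L : PhiStar S f -> PhiStar S (f ^+ L).
Proof.
move=> Hf; elim: L => [|L IH]; first by rewrite expr0; apply: PS_1.
by rewrite exprS; apply: PS_mul.
Qed.
Lemma PS_Xn (S : nat -> Prop) d : (0 < d)%N -> (forall k, divs d k -> S k) ->
  PhiStar S ('X^d - 1).
Proof.
move=> d0 H; exists (divisors d); split; last by rewrite prod_Cyclotomic.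
move=> k kd; apply: H; rewrite /divs -dvdn_divisors // in kd *; split=> //.
by case: k kd => //; rewrite dvd0n => /eqP d00; rewrite d00 in d0.
Qed.

Lemma compat_mono (R : comNzRingType) (S S' : nat -> Prop) (x : {poly int} -> {poly R}) :
  (forall k, S k -> S' k) -> compatible S' x -> compatible S x.
Proof. by move=> H c f g Hf Hg; apply: c; apply: PS_mono Hf || apply: PS_mono Hg. Qed.

Definition E (d L : nat) : {poly int} := ('X^d - 1) ^+ L.

Lemma E_PS n d L : (0 < d)%N -> (d %| n)%N -> PhiStar (divs n) (E d L).
Proof.
move=> d0 dn; apply: PS_exp; apply: PS_Xn => // k [k0 kd]; split=> //.
exact: dvdn_trans dn.
Qed.

Lemma E_div d e a b : (a <= b)%N -> exists h, E (d * e) b = h * E d a.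
Proof.
move=> ab.
have [s Hs] : exists s, 'X^(d * e) - 1 = ('X^d - 1) * s :> {poly int}.
  by exists (\sum_(i < e) ('X^d) ^+ (e.-1 - i) * 1 ^+ i); rewrite exprM -subrXX expr1n.
exists (('X^d - 1) ^+ (b - a) * s ^+ b); rewrite /E Hs exprMn.
by rewrite -{1}(subnK ab) exprD -!mulrA [_ ^+ a * _]mulrC.
Qed.

Lemma powlem (R : comNzRingType) (a b : R) k : exists H, (a + b) ^+ k = a * H + b ^+ k.
Proof.
elim: k => [|k [H e]]; first by exists 0; rewrite mulr0 add0r !expr0.
exists (H * (a + b) + b ^+ k); rewrite exprS mulrC e exprS; ring.
Qed.

Definition multof {R : comNzRingType} (c a : R) := exists g, a = c * g.

Lemma binlem (R : comNzRingType) (T : R) l : prime l ->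
  exists G, (T - 1) ^+ l = (T ^+ l - 1) + l%:R * G.
Proof.
move=> pl.
have l0 : (0 < l)%N by apply: prime_gt0.
have [G1 e1] : multof l%:R ((-1) ^+ l + 1 : R).
  case: (even_prime pl) => [->|ol]; first by exists 1; rewrite mulr1 expr2 mulrNN mulr1.
  by exists 0; rewrite mulr0 -signr_odd ol expr1 addNr.
case: l pl l0 G1 e1 => // l' pl _ G1 e1.
rewrite /= in e1.
have := exprDn T (-1) l'.+1.
rewrite big_ord_recl big_ord_recr /= subn0 expr0 mulr1 bin0 mulr1n subnn expr0 mul1r binn mulr1n.
set M := (\sum_(_ < _) _) => eT.
have [G2 e2] : multof l'.+1%:R M.
  apply: (big_ind (multof l'.+1%:R)).
  - by exists 0; rewrite mulr0.
  - by move=> u v [gu ->] [gv ->]; exists (gu + gv); rewrite mulrDr.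
  move=> i _; rewrite /bump /= add1n.
  have hd : (l'.+1 %| 'C(l'.+1, i.+1))%N.
    by apply: prime_dvd_bin => //=; rewrite ltnS ltn_ord.
  exists (T ^+ (l'.+1 - i.+1) * (-1) ^+ i.+1 *+ ('C(l'.+1, i.+1) %/ l'.+1)).
  by rewrite -{1}(divnK hd) mulrnA mulr_natl.
exists (G2 + G1); rewrite eT mulrDr -e1 -e2.
rewrite /bump /= add1n.
ring.
Qed.

Lemma sep_lemma (R : comNzRingType) l (D w : {poly R}) :
  padic_separated R l -> D \is monic ->
  (forall j, exists u v, w = u * D + (l ^ j)%:R * v) -> exists h, w = h * D.
Proof.
move=> Hs mD Hw; exists (Pdiv.CommonRing.rdivp w D).
suff e : Pdiv.CommonRing.rmodp w D = 0.
  by rewrite {1}(Pdiv.RingMonic.rdivp_eq mD w) e addr0.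
apply/polyP => i; rewrite coef0; apply: Hs => j.
have [u [v ->]] := Hw j.
rewrite (Pdiv.RingMonic.rmodpD mD) (Pdiv.RingMonic.rmodp_mull mD) add0r.
rewrite -polyC_natr mul_polyC (Pdiv.RingMonic.rmodpZ mD) coefZ.
by exists ((Pdiv.CommonRing.rmodp v D)`_i).
Qed.

Lemma alemma (R : comNzRingType) (a c G : {poly R}) l :
  a ^+ l = c + l%:R * G ->
  forall N j, exists u v, a ^+ (l * N * j) = u * c ^+ N + (l ^ j)%:R * v.
Proof.
move=> e N j.
have [H eH] := powlem (l%:R * G) c N.
have [H' eH'] := powlem (c ^+ N) (l%:R * G * H) j.
exists H'; exists ((G * H) ^+ j).
rewrite exprM exprM e addrC eH addrC eH' natrX mulrC; congr (_ + _).
by rewrite -exprMn mulrA.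
Qed.

Lemma polyRE (R : comNzRingType) d L : polyR R (E d L) = ('X^d - 1) ^+ L.
Proof. by rewrite /E polyRX polyRXn. Qed.

Lemma step (R : comNzRingType) n (x y : {poly int} -> {poly R}) d l :
  compatible (divs n) x -> compatible (divs n) y -> prime l ->
  padic_separated R l -> (0 < d)%N -> (d * l %| n)%N ->
  (forall L, congr_mod (E d L) (x (E d L)) (y (E d L))) ->
  forall N, congr_mod (E (d * l) N) (x (E (d * l) N)) (y (E (d * l) N)).
Proof.
move=> cx cy pl sl d0 dln Pd N.
have l0 : (0 < l)%N by apply: prime_gt0.
have dn : (d %| n)%N by apply: dvdn_trans dln; apply: dvdn_mulr.
have dl0 : (0 < d * l)%N by rewrite muln_gt0 d0.
rewrite /congr_mod polyRE.
apply: (@sep_lemma R l _ _ sl); first by apply: monic_exp; apply: monicXnsubC.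
move=> j.
have [G eG] := binlem ('X^d : {poly R}) pl.
rewrite -exprM in eG.
have [u [v euv]] := alemma eG N j.+1.
set M := (l * N * j.+1)%N.
have NM : (N <= M)%N by rewrite /M; nia.
have h1 : congr_mod (E d M) (x (E (d * l) M)) (x (E d M)).
  by apply: cx; [apply: E_PS|apply: E_PS|apply: E_div].
have h2 : congr_mod (E d M) (y (E (d * l) M)) (y (E d M)).
  by apply: cy; [apply: E_PS|apply: E_PS|apply: E_div].
have h3 := Pd M.
have [k ek] := cm_trans h1 (cm_trans h3 (cm_sym h2)).
have [h eh] := E_div (d * l) 1 NM; rewrite muln1 in eh.
have [k4 e4] : congr_mod (E (d * l) N) (x (E (d * l) M)) (x (E (d * l) N)).
  by apply: cx; [apply: E_PS|apply: E_PS|exists h].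
have [k5 e5] : congr_mod (E (d * l) N) (y (E (d * l) M)) (y (E (d * l) N)).
  by apply: cy; [apply: E_PS|apply: E_PS|exists h].
rewrite polyRE in ek; rewrite polyRE in e4; rewrite polyRE in e5.
have ex : x (E (d * l) N) = x (E (d * l) M) - k4 * ('X^(d * l) - 1) ^+ N.
  by rewrite -e4 opprB addrC subrK.
have ey : y (E (d * l) N) = y (E (d * l) M) - k5 * ('X^(d * l) - 1) ^+ N.
  by rewrite -e5 opprB addrC subrK.
have exM : x (E (d * l) M) = y (E (d * l) M) + k * ('X^d - 1) ^+ M.
  by rewrite -ek addrC subrK.
rewrite ex ey exM euv expnSr natrM.
exists (k * u - k4 + k5); exists (k * (l%:R * v)); ring.
Qed.

Lemma divE n (s : seq nat) : (0 < n)%N -> (forall k, k \in s -> divs n k) ->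
  exists h, E n (size s) = h * \prod_(k <- s) 'Phi_k.
Proof.
move=> n0; elim: s => [|k s IH] Hs.
  by exists 1; rewrite /E expr0 big_nil mulr1.
have [h eh] := IH (fun i hi => Hs i (mem_behead (s:=k :: s) hi)).
have [k0 kn] := Hs k (mem_head _ _).
have kd : k \in divisors n by rewrite -dvdn_divisors.
have e : 'X^n - 1 = 'Phi_k * \prod_(i <- divisors n | i != k) 'Phi_i.
  by rewrite -prod_Cyclotomic // (bigD1_seq k) //= divisors_uniq.
exists (\prod_(i <- divisors n | i != k) 'Phi_i * h).
rewrite /E /= exprS -/(E n (size s)) eh e big_cons; ring.
Qed.

Lemma core (R : comNzRingType) n (x y : {poly int} -> {poly R}) :
  (0 < n)%N -> (forall l, prime l -> (l %| n)%N -> padic_separated R l) ->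
  compatible (divs n) x -> compatible (divs n) y ->
  lim_eq (divs 1) x y -> lim_eq (divs n) x y.
Proof.
move=> n0 Hs cx cy H1.
have Pall : forall d, (d %| n)%N -> (0 < d)%N ->
    forall L, congr_mod (E d L) (x (E d L)) (y (E d L)).
  elim/ltn_ind => d IH dn d0.
  case: (ltngtP d 1) => [|d1|->]; first by rewrite ltnS leqn0 => /eqP d00; rewrite d00 in d0.
    set l := pdiv d.
    have pl : prime l by apply: pdiv_prime.
    have l1 : (1 < l)%N by apply: prime_gt1.
    have ed : (d %/ l * l)%N = d by apply: divnK; apply: pdiv_dvd.
    have d'0 : (0 < d %/ l)%N by rewrite divn_gt0 ?pdiv_leq // ltnW.
    rewrite -ed; apply: (step (n:=n)) => //.
    - by apply: Hs => //; apply: dvdn_trans dn; apply: pdiv_dvd.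
    - by rewrite ed.
    apply: IH => //; first by apply: ltn_Pdiv.
    by apply: dvdn_trans dn; rewrite -{2}ed; apply: dvdn_mulr.
  by move=> L; apply: H1; apply: E_PS.
move=> f [s [Hs' ef]].
have [h eh] := divE n0 Hs'.
have fPS : PhiStar (divs n) f by exists s.
have EPS : PhiStar (divs n) (E n (size s)) by apply: E_PS.
have hx : congr_mod f (x (E n (size s))) (x f) by apply: cx => //; exists h; rewrite ef.
have hy : congr_mod f (y (E n (size s))) (y f) by apply: cy => //; exists h; rewrite ef.
have hE : congr_mod f (x (E n (size s))) (y (E n (size s))).
  by apply: (cm_div (Pall n (dvdnn n) n0 (size s))); rewrite eh ef.
exact: cm_trans (cm_sym hx) (cm_trans hE hy).
Qed.

Lemma chain_sep (R : comNzRingType) S a c : chain S (@equivR R) a c ->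
  (forall l, prime l -> (l %| a)%N -> padic_separated R l) ->
  (forall l, prime l -> (l %| c)%N -> padic_separated R l).
Proof.
elim=> [//|a' b c' _ IH Sc rel] Ha l pl lc.
case: rel => [eb|[[p [j [pp [sp [e|e]]]]]|triv]].
- by apply: IH => //; rewrite eb.
- by apply: IH => //; rewrite e; apply: dvdn_mull.
- rewrite e Euclid_dvdM // Euclid_dvdX // in lc.
  case/orP: lc => [/andP [lp _]|lb]; last by apply: IH.
  by move: lp; rewrite dvdn_prime2 // => /eqP ->.
- by have := triv 1; move/eqP; rewrite oner_eq0.
Qed.

Lemma sep_int p : prime p -> padic_separated int p.
Proof.
move=> pp x H.
have [y e] := H `|x|%N.
case: (y =P 0) => [y0|ny]; first by rewrite e y0 mulr0.
exfalso.
have ax : `|x|%N = (p ^ `|x|%N * `|y|%N)%N by rewrite {1}e abszM natz.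
have y1 : (0 < `|y|%N)%N by rewrite absz_gt0; apply/eqP.
have lt := ltn_expl `|x|%N (prime_gt1 pp).
move: ax lt y1; set a := `|x|%N; set b := `|y|%N; set c := (p ^ a)%N; nia.
Qed.

Lemma lim_mono (R : comNzRingType) (S S' : nat -> Prop) (x y : {poly int} -> {poly R}) :
  (forall k, S k -> S' k) -> lim_eq S' x y -> lim_eq S x y.
Proof. by move=> H e f Hf; apply: e; apply: PS_mono Hf. Qed.

Lemma divs_mono n c : (n %| c)%N -> forall k, divs n k -> divs c k.
Proof. by move=> nc k [k0 kn]; split=> //; apply: dvdn_trans nc. Qed.

Lemma ident (R : comNzRingType) (S : nat -> Prop) :
  (forall k, S k -> (0 < k)%N) -> S 1%N ->
  (forall a b, S a -> S b -> exists c, [/\ S c, (a %| c)%N & (b %| c)%N]) ->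
  (forall n, S n -> forall k, divs n k -> S k) ->
  (forall n, S n -> forall x y : {poly int} -> {poly R},
     compatible (divs n) x -> compatible (divs n) y ->
     lim_eq (divs 1) x y -> lim_eq (divs n) x y) ->
  identified_with_intersection R S.
Proof.
move=> Hpos S1 Hdir Hcl Hinj.
have Hfind : forall f, PhiStar S f -> exists n, S n /\ PhiStar (divs n) f.
  move=> f [s [Hs ->]].
  suff [n [Sn Hn]] : exists n, S n /\ forall k, k \in s -> divs n k.
    by exists n; split=> //; exists s.
  elim: s Hs => [|k s IH] Hs.
    by exists 1%N.
  have [n [Sn Hn]] := IH (fun i hi => Hs i (mem_behead (s:=k :: s) hi)).
  have Sk := Hs k (mem_head _ _).
  have [c [Sc kc nc]] := Hdir k n Sk Sn.
  exists c; split=> // k'; rewrite in_cons => /orP [/eqP ->|ks].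
    by split=> //; apply: Hpos.
  by apply: divs_mono nc _ (Hn k' ks).
have rel : forall n c (z z' : {poly int} -> {poly R}) y, S n -> (n %| c)%N ->
    compatible (divs n) z -> compatible (divs c) z' ->
    lim_eq (divs 1) z y -> lim_eq (divs 1) z' y -> lim_eq (divs n) z' z.
  move=> n c z z' y Sn nc cz cz' ez ez'.
  apply: Hinj => //; first by apply: compat_mono cz'; apply: divs_mono.
  by move=> f Hf; apply: cm_trans (ez' f Hf) (cm_sym (ez f Hf)).
split.
  move=> x y cx cy e1 f Hf.
  have [n [Sn Hn]] := Hfind f Hf.
  by apply: (Hinj n Sn) => //; apply: compat_mono; try apply: Hcl; auto.
move=> y cy; split.
  move=> [x [cx ex]] n Sn; exists x; split=> //.
  by apply: compat_mono cx; apply: Hcl.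
move=> Hz.
pose P f v := exists n z, [/\ S n, PhiStar (divs n) f, compatible (divs n) z,
  lim_eq (divs 1) z y & v = z f].
have HP : forall f, PhiStar S f -> P f (epsilon (inhabits 0) (P f)).
  move=> f Hf; apply: epsilon_spec.
  have [n [Sn Hn]] := Hfind f Hf.
  have [z [cz ez]] := Hz n Sn.
  by exists (z f); exists n; exists z.
exists (fun f => epsilon (inhabits 0) (P f)); split.
  move=> f g Hf Hg [h eh].
  have [n1 [z1 [Sn1 Hf1 cz1 ez1 ->]]] := HP f Hf.
  have [n2 [z2 [Sn2 Hg2 cz2 ez2 ->]]] := HP g Hg.
  have [c [Sc n1c n2c]] := Hdir n1 n2 Sn1 Sn2.
  have [z3 [cz3 ez3]] := Hz c Sc.
  have A : congr_mod f (z2 g) (z3 g).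
    apply: (cm_div _ eh); apply: cm_sym.
    exact: (rel n2 c z2 z3 y Sn2 n2c cz2 cz3 ez2 ez3 g Hg2).
  have B : congr_mod f (z3 g) (z3 f).
    apply: cz3; last by exists h.
      exact: PS_mono (divs_mono n1c) Hf1.
    exact: PS_mono (divs_mono n2c) Hg2.
  have C : congr_mod f (z3 f) (z1 f).
    exact: (rel n1 c z1 z3 y Sn1 n1c cz1 cz3 ez1 ez3 f Hf1).
  exact: cm_trans A (cm_trans B C).
move=> f Hf.
have Hf' : PhiStar S f by apply: PS_mono Hf; apply: Hcl.
have [n [z [Sn Hfn cz ez ->]]] := HP f Hf'.
exact: ez.
Qed.

Lemma rho_gen (R : comNzRingType) m n :
  (0 < n)%N -> (forall l, prime l -> (l %| n)%N -> padic_separated R l) ->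
  rho_injective R m n.
Proof.
move=> n0 Hs x y cx cy em; apply: core => //.
apply: lim_mono em => k [k0 k1]; split=> //.
by have := dvdn_leq (isT : (0 < 1)%N) k1; case: k k0 {k1} => // [[]].
Qed.

Theorem corollary4p3 :
  (forall (R : comNzRingType) (S : nat -> Prop), admissible R S ->
     (forall m n : nat, S m -> S n -> (m %| n)%N -> rho_injective R m n)
     /\ identified_with_intersection R S)
  /\
  ((forall m n : nat, (0 < m)%N -> (0 < n)%N -> (m %| n)%N -> rho_injective int m n)
   /\ identified_with_intersection int Nat_pos).
Proof.
split.
  move=> R S [Hpos [[k0 Sk0] [Hch [Hdir Hcl]]]].
  have S1 : S 1%N by apply: (Hcl k0 Sk0); split=> //; apply: dvd1n.
  have Hsep : forall n, S n -> forall l, prime l -> (l %| n)%N -> padic_separated R l.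
    move=> n Sn; apply: (chain_sep (Hch 1%N n S1 Sn)) => l pl l1.
    by move: (prime_gt1 pl); rewrite dvdn1 in l1; rewrite (eqP l1) ltnn.
  split.
    by move=> m n _ Sn _; apply: rho_gen; [apply: Hpos | apply: Hsep].
  apply: ident => // n Sn x y; apply: rho_gen; [apply: Hpos | apply: Hsep] => //.
have Hsep : forall n l, prime l -> (l %| n)%N -> padic_separated int l.
  by move=> n l pl _; apply: sep_int.
split.
  by move=> m n _ n0 _; apply: rho_gen => //; apply: Hsep.
apply: ident => //.
- by move=> a b a0 b0; exists (a * b)%N; split; [rewrite /Nat_pos muln_gt0 a0 | apply: dvdn_mulr | apply: dvdn_mull].
- by move=> n _ k [].
- by move=> n n0 x y; apply: rho_gen => //; apply: Hsep.
Qed.
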